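(* Consider an instance with $n$ agents, $m$ items and binary additive valuations (notation as in the context). For each integer $d\ge0$ let $\gamma_d$ be a stable allocation of the sub-instance consisting of the agents $\mathsf{layer}_d$ and the items $\mathsf{Layer}_d$, treated as indivisible items, and for each integer $d\ge1$ let $\gamma^-_d$ be a stable fractional allocation of the sub-instance consisting of the agents $\mathsf{layer}^-_d$ and the items $\mathsf{Layer}^-_d$, treated as divisible items (valuations restricted to these items). Then the fractional allocation $\gamma$ of the whole instance obtained by combining all $\gamma_d$ and $\gamma^-_d$ (with items unallocated by $\chi^0$ left unallocated) is a stable fractional allocation of the whole instance with divisible items.
   Context: Agents $[n]$, items $[m]$; each agent $i$ has a set $L_i\subseteq[m]$ of liked items. Indivisible setting: an allocation $\chi=(\chi_1,\dots,\chi_n)$ is a tuple of pairwise disjoint subsets of $[m]$, clean if $\chi_i\subseteq L_i$, max-USW if it maximizes $\sum_i|\chi_i\cap L_i|$; allocations are clean and max-USW; $h_i=|\chi_i|$. Arc $(i,i')$, $i\ne i'$, if some $o\in\chi_i$ lies in $L_{i'}$; a transfer $u\to v$ is a simple directed path from $u$ to $v$ with at least one arc; narrowing if $h_u\ge h_v+2$; stable if no narrowing transfer. For integer $d\ge0$, $\mathsf{layer}_d$ is the set of agents $i$ with $|\chi_i|=d$ in every stable indivisible allocation; for integer $d\ge1$, $\mathsf{layer}^-_d$ is the set of agents $i$ with $\{|\chi_i|:\chi\text{ stable}\}=\{d-1,d\}$. Fix a stable indivisible allocation $\chi^0$ and let $\mathsf{Layer}_d=\bigcup_{i\in\mathsf{layer}_d}\chi^0_i$,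 $\mathsf{Layer}^-_d=\bigcup_{i\in\mathsf{layer}^-_d}\chi^0_i$. Divisible setting: a fractional allocation is $x=(x_{o,i})$ with $x_{o,i}\ge0$, $\sum_i x_{o,i}\le1$; clean if $x_{o,i}=0$ for $o\notin L_i$; max-USW if it maximizes $\sum_i\sum_{o\in L_i}x_{o,i}$; allocations are clean and max-USW; $h_i=\sum_o x_{o,i}$. A transfer $u\to v$: distinct agents $u=i_1,\dots,i_k=v$ ($k\ge2$), items $o_l$ with $x_{o_l,i_l}>0$, $o_l\in L_{i_{l+1}}$, amount $0<\Delta\le\min_l x_{o_l,i_l}$, moving $\Delta$ of $o_l$ from $i_l$ to $i_{l+1}$; narrowing if $h_u-\Delta\ge h_v+\Delta$; stable if no narrowing transfer. An indivisible allocation is viewed as a fractional one with entries in $\{0,1\}$. *)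

(* Defs.v *)
From HB Require Import structures.
From mathcomp Require Import all_boot all_order all_algebra.
From mathcomp Require Import boolp reals.
Set Implicit Arguments. Unset Strict Implicit. Unset Printing Implicit Defensive.
Import Order.TTheory GRing.Theory Num.Theory.
Local Open Scope ring_scope.

Section Alloc.
Variables (agent item : finType) (L : agent -> {set item}).

Definition ialloc (A : {set agent}) (B : {set item}) (chi : agent -> {set item}) :=
  [/\ forall i, i \notin A -> chi i = set0,
      forall i, chi i \subset B &
      forall i j, i != j -> [disjoint chi i & chi j]].

Definition iclean (A : {set agent}) (B : {set item}) (chi : agent -> {set item}) :=
  forall i, i \in A -> chi i \subset L i :&: B.

Definition iusw (A : {set agent}) (B : {set item}) (chi : agent -> {set item}) : nat :=
  (\sum_(i in A) #|chi i :&: (L i :&: B)|)%N.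

Definition imaxusw A B chi :=
  forall chi', ialloc A B chi' -> (iusw A B chi' <= iusw A B chi)%N.

Definition iarc (A : {set agent}) (B : {set item}) (chi : agent -> {set item}) : rel agent :=
  fun i i' => [&& i \in A, i' \in A, i != i' &
                  [exists o, (o \in chi i) && (o \in L i' :&: B)]].

Definition itransfer A B chi (u v : agent) :=
  exists p : seq agent,
    [/\ p != [::], path (iarc A B chi) u p, uniq (u :: p) & last u p = v].

Definition istable A B chi :=
  [/\ ialloc A B chi, iclean A B chi, imaxusw A B chi &
      forall u v, itransfer A B chi u v -> ~~ (#|chi v| + 2 <= #|chi u|)%N].

Variable R : realType.

(* x o i = amount of item o given to agent i *)
Definition falloc (A : {set agent}) (B : {set item}) (x : item -> agent -> R) :=
  [/\ forall o i, 0 <= x o i,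
      forall o, \sum_(i in A) x o i <= 1 &
      forall o i, (i \notin A) || (o \notin B) -> x o i = 0].

Definition fclean (A : {set agent}) (B : {set item}) (x : item -> agent -> R) :=
  forall o i, o \notin L i :&: B -> x o i = 0.

Definition fusw (A : {set agent}) (B : {set item}) (x : item -> agent -> R) : R :=
  \sum_(i in A) \sum_(o in L i :&: B) x o i.

Definition fmaxusw A B x :=
  forall y, falloc A B y -> fusw A B y <= fusw A B x.

Definition fh (x : item -> agent -> R) (i : agent) : R := \sum_o x o i.

(* a transfer u = i_1, ..., i_k = v (k >= 2, distinct agents), encoded as the
   list of steps (o_l, i_{l+1}); each step moves Delta of o_l from i_l to
   i_{l+1}, where x_{o_l,i_l} >= Delta > 0 and o_l is liked by i_{l+1} *)
Definition ftransfer (A : {set agent}) (B : {set item}) (x : item -> agent -> R)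
    (u v : agent) (Delta : R) :=
  exists s : seq (item * agent),
    [/\ s != [::], uniq (u :: map snd s), last u (map snd s) = v,
        all (mem A) (u :: map snd s) & 0 < Delta] /\
        (forall a o b, (a, (o, b)) \in zip (u :: map snd s) s ->
          0 < x o a /\ Delta <= x o a /\ o \in L b :&: B).

Definition fstable A B x :=
  [/\ falloc A B x, fclean A B x, fmaxusw A B x &
      forall u v Delta, ftransfer A B x u v Delta ->
        ~ (fh x v + Delta <= fh x u - Delta)].

End Alloc.

Section Layers.
Variables (agent item : finType) (L : agent -> {set item}).

Definition wstable (chi : agent -> {set item}) := istable L setT setT chi.

Definition layer (d : nat) : {set agent} :=
  [set i | `[< forall chi, wstable chi -> #|chi i| = d >]].

Definition layerm (d : nat) : {set agent} :=
  [set i | `[< (forall chi, wstable chi -> #|chi i| = d.-1 \/ #|chi i| = d)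
             /\ (exists chi, wstable chi /\ #|chi i| = d.-1)
             /\ (exists chi, wstable chi /\ #|chi i| = d) >]].

Definition Layer (chi0 : agent -> {set item}) (d : nat) : {set item} :=
  \bigcup_(i in layer d) chi0 i.

Definition Layerm (chi0 : agent -> {set item}) (d : nat) : {set item} :=
  \bigcup_(i in layerm d) chi0 i.

(* Layers with d > #|item| are empty (any bundle has
   at most #|item| items), so summing over d <= #|item| covers all of them. *)
Definition combine (R : realType) (gam : nat -> agent -> {set item})
    (gamm : nat -> item -> agent -> R) : item -> agent -> R :=
  fun o i => \sum_(0 <= d < #|item|.+1) ((o \in gam d i)%:R : R)
           + \sum_(1 <= d < #|item|.+1) gamm d o i.

End Layers.

(* Main.v *)
Require Import Defs.
From HB Require Import structures.
From mathcomp Require Import all_boot all_order all_algebra.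
From mathcomp Require Import boolp reals.
From mathcomp Require Import zify ring lra.
Import Order.TTheory GRing.Theory Num.Theory.
Set Implicit Arguments. Unset Strict Implicit. Unset Printing Implicit Defensive.

Module P1.
Local Open Scope ring_scope.

Section Gen.
Variables (agent item : finType) (R : realType).

Definition erel (x y : item -> agent -> R) : rel agent :=
  fun a b => (a != b) && [exists o, (0 < x o a) && (0 < y o b)].

Lemma fwd (x y : item -> agent -> R) :
  (forall o a, 0 <= x o a) -> (forall o a, 0 <= y o a) ->
  (forall o, \sum_a x o a <= \sum_a y o a) ->
  forall i, fh y i < fh x i -> exists k, fh x k < fh y k /\ connect (erel x y) i k.
Proof.
move=> x0 y0 sxy i hi.
set S := [set b | connect (erel x y) i b].
have key : \sum_(a in S) fh x a <= \sum_(a in S) fh y a.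
  rewrite /fh (exchange_big _ _ _ (mem S)) [leRHS](exchange_big _ _ _ (mem S)) /=.
  apply: ler_sum => o _.
  case: (boolP [exists a in S, 0 < x o a]).
  - case/exists_inP => a aS xa.
    have -> : \sum_(b in S) y o b = \sum_b y o b.
      rewrite [RHS](bigID (mem S)) /= [X in _ = _ + X]big1 ?addr0 // => b bS.
      apply/eqP; rewrite eq_le y0 andbT leNgt; apply/negP => yb.
      apply: (negP bS); rewrite inE.
      rewrite inE in aS; apply: connect_trans aS _.
      case: (eqVneq a b) => [->//|ab]; apply: connect1.
      by rewrite /erel ab /=; apply/existsP; exists o; rewrite xa yb.
    apply: le_trans (sxy o).
    by rewrite [leRHS](bigID (mem S)) /= lerDl sumr_ge0.
  - rewrite negb_exists_in => /forall_inP H.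
    rewrite big1 ?sumr_ge0 // => a aS.
    have := H a aS; rewrite -leNgt => le0; apply/eqP; by rewrite eq_le le0 x0.
have [/exists_inP [k kS hk]|] := boolP [exists k in S, fh x k < fh y k].
  by exists k; split => //; rewrite inE in kS.
rewrite negb_exists_in => /forall_inP H; exfalso.
have iS : i \in S by rewrite inE connect0.
have : \sum_(a in S) fh y a < \sum_(a in S) fh x a.
  rewrite (bigD1 i) //= [X in _ < X](bigD1 i) //=.
  apply: ltr_leD => //; apply: ler_sum => a /andP[aS _].
  by rewrite leNgt H.
by rewrite ltNge key.
Qed.

Lemma connect_revP (e : rel agent) a b :
  connect e a b -> connect (fun x y => e y x) b a.
Proof.
move=> h; have := connect_rev e b a. 
by rewrite /= h.
Qed.

End Gen.

End P1.
Import P1.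

Module P2.
Local Open Scope ring_scope.

Section Gen2.
Variables (agent item : finType) (R : realType) (L : agent -> {set item}).

Lemma ist_reach A B chi :
  (forall u v, itransfer L A B chi u v -> ~~ (#|chi v| + 2 <= #|chi u|)%N) ->
  forall u v, connect (iarc L A B chi) u v -> (#|chi u| <= #|chi v| + 1)%N.
Proof.
move=> H u v; case: (eqVneq u v) => [-> _|uv]; first by rewrite leq_addr.
case/connectP => p pth lst.
case/shortenP: pth lst => p' pth' uq _ lst.
have : itransfer L A B chi u v.
  exists p'; split => //.
  by apply/eqP => p0; move: lst; rewrite p0 /= => /eqP; rewrite eq_sym (negbTE uv).
move/H; rewrite -ltnNge; lia.
Qed.

Definition ind (chi : agent -> {set item}) : item -> agent -> R :=
  fun o a => ((o \in chi a)%:R : R).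

Lemma fh_ind chi a : fh (ind chi) a = #|chi a|%:R.
Proof.
rewrite /fh /ind -sum1_card natr_sum [RHS]big_mkcond; apply: eq_bigr => o _.
by case: (o \in chi a).
Qed.

Definition farc (A : {set agent}) (B : {set item}) (x : item -> agent -> R) : rel agent :=
  fun a b => [&& a \in A, b \in A, a != b & [exists o, (0 < x o a) && (o \in L b :&: B)]].

Lemma fst_arc A B x a b : fstable L A B x -> farc A B x a b -> fh x a <= fh x b.
Proof.
case=> _ _ _ H /and4P[aA bA ab /existsP[o /andP[xo oL]]].
rewrite leNgt; apply/negP => lt.
pose D := Num.min (x o a) ((fh x a - fh x b) / 2).
have D0 : 0 < D by rewrite /D lt_min xo /= divr_gt0 // subr_gt0.
apply: (H a b D).
  exists [:: (o, b)]; split; first by rewrite /= inE ab aA bA.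
  move=> a' o' b'; rewrite /= inE => /eqP [-> -> ->]; split => //; split => //.
  by rewrite /D ge_min lexx.
have : D <= (fh x a - fh x b) / 2 by rewrite /D ge_min lexx orbT.
move=> h. 
have h2 : 2 * D <= fh x a - fh x b by rewrite -ler_pdivlMl // mulrC.
lra.
Qed.
End Gen2.

End P2.
Import P2.

Module P3.

Section Whole.
Variables (agent item : finType) (L : agent -> {set item}).

Definition okw (chi : agent -> {set item}) :=
  ialloc [set: agent] [set: item] chi /\ iclean L [set: agent] [set: item] chi.

Definition moveA (chi : agent -> {set item}) u v o : agent -> {set item} :=
  fun x => if x == u then chi u :\ o else if x == v then o |: chi v else chi x.

Lemma disjP (T : finType) (A B : {set T}) :
  reflect (forall x, x \in A -> x \in B -> False) [disjoint A & B].
Proof.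
rewrite disjoint_subset; apply: (iffP subsetP) => [H x xa xb | H x xa].
  by have := H x xa; rewrite inE xb.
by rewrite inE; apply/negP => xb; exact: H x xa xb.
Qed.

Lemma disj_not (chi : agent -> {set item}) :
  (forall i j, i != j -> [disjoint chi i & chi j]) ->
  forall o i j, o \in chi i -> o \in chi j -> i = j.
Proof.
move=> D o i j oi oj; apply/eqP; apply/negPn/negP => /D /disjP H; exact: H o oi oj.
Qed.

Lemma moveA_mem chi u v o : okw chi -> o \in chi u -> u != v ->
  forall p x, (p \in moveA chi u v o x) = if p == o then x == v else p \in chi x.
Proof.
case=> [[_ _ D] _] ou uv p x; rewrite /moveA.
case: (eqVneq p o) => [->|po].
  case: (eqVneq x u) => [->|xu]; first by rewrite !inE eqxx /= (negbTE uv).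
  case: (eqVneq x v) => [_|xv]; first by rewrite !inE eqxx.
  by apply/negP => ox; move/eqP: xu; apply; apply: disj_not D _ _ _ ox ou.
case: (eqVneq x u) => [->|xu]; first by rewrite !inE po.
case: (eqVneq x v) => [->|xv]; first by rewrite !inE (negbTE po).
by [].
Qed.

Lemma moveA_ok chi u v o : okw chi -> o \in chi u -> o \in L v -> u != v ->
  okw (moveA chi u v o).
Proof.
move=> ok ou ov uv; have M := moveA_mem ok ou uv.
case: ok => [[_ _ D] C].
split; first split.
- by move=> i; rewrite inE.
- by move=> i; apply: subsetT.
- move=> i j ij; apply/disjP => p; rewrite !M.
  case: (eqVneq p o) => [_ /eqP iv /eqP jv|_ pi pj]; first by move: ij; rewrite iv jv eqxx.
  by move: ij; rewrite (disj_not D pi pj) eqxx.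
- move=> i _; apply/subsetP => p; rewrite M.
  case: (eqVneq p o) => [-> /eqP ->|_ pi]; first by rewrite !inE ov.
  by have /subsetP := C i (in_setT i); apply.
Qed.

Lemma moveA_card chi u v o : okw chi -> o \in chi u -> u != v ->
  forall x, (#|moveA chi u v o x| + (x == u) = #|chi x| + (x == v))%N.
Proof.
move=> ok ou uv x; rewrite /moveA.
case: (eqVneq x u) => [->|xu].
  by rewrite (negbTE uv) (cardsD1 o (chi u)) ou; lia.
case: (eqVneq x v) => [->|xv]; last by [].
rewrite cardsU1.
have -> : o \notin chi v.
  by apply/negP => ov; move: uv; case: ok => [[_ _ D] _]; rewrite (disj_not D ou ov) eqxx.
by rewrite addn0 addnC.
Qed.

Lemma moveA_out chi u v o x : x != u -> x != v -> moveA chi u v o x = chi x.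
Proof. by rewrite /moveA => /negbTE -> /negbTE ->. Qed.

Lemma shift p : forall u chi, okw chi ->
  path (iarc L [set: agent] [set: item] chi) u p -> uniq (u :: p) ->
  exists chi', [/\ okw chi',
    forall x, (#|chi' x| + (x == u) = #|chi x| + (x == last u p))%N &
    forall x, x \notin u :: p -> chi' x = chi x].
Proof.
elim: p => [|v p IH] u chi ok.
  by move=> _ _; exists chi; split.
rewrite /= => /andP[a pth] /andP[uN uq].
have [chi1 [ok1 c1 o1]] := IH v chi ok pth uq.
have chi1u : chi1 u = chi u by apply: o1.
case/and4P: a => _ _ uv /existsP[o /andP[ou ov]].
rewrite inE in ov; case/andP: ov => ov _.
rewrite -chi1u in ou.
exists (moveA chi1 u v o); split.
- exact: moveA_ok.
- move=> x; have := moveA_card ok1 ou uv x; have := c1 x; lia.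
- move=> x; rewrite !inE !negb_or => /and3P[xu xv xp].
  rewrite moveA_out //; apply: o1; by rewrite inE negb_or xv.
Qed.
End Whole.

End P3.
Import P3.

Module P4.

Section W2.
Variables (agent item : finType) (L : agent -> {set item}) (R : realType).

Lemma maxcover (A : {set agent}) (B : {set item}) chi :
  ialloc A B chi -> imaxusw L A B chi ->
  forall o a, o \in B -> a \in A -> o \in L a -> exists b, o \in chi b.
Proof.
move=> [out sub D] M o a oB aA oL.
case: (pickP (fun b => o \in chi b)) => [b ob|N]; first by exists b.
exfalso.
pose chi' := fun x => if x == a then o |: chi a else chi x.
have al : ialloc A B chi'.
  split.
  - move=> i iA; rewrite /chi'; case: (eqVneq i a) => [ia|_]; last by apply: out.
    by move: iA; rewrite ia aA.
  - move=> i; rewrite /chi'; case: (eqVneq i a) => _; last by [].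
    by rewrite subUset sub1set oB sub.
  - have G : forall j, j != a -> [disjoint o |: chi a & chi j].
      move=> j ja; apply/disjP => p; rewrite !inE => /orP[/eqP ->|pa] pj.
        by have := N j; rewrite /= pj.
      have /disjP H := D a j (ltac:(by rewrite eq_sym)); exact: H p pa pj.
    move=> i j ij; rewrite /chi'.
    case: (eqVneq i a) => [ia|ia]; case: (eqVneq j a) => [ja|ja].
    + by move: ij; rewrite ia ja eqxx.
    + by apply: G.
    + by rewrite disjoint_sym; apply: G.
    + by apply: D.
have := M chi' al; rewrite /iusw (bigD1 a) //= [X in (_ <= X)%N](bigD1 a) //=.
rewrite /chi' eqxx.
have -> : \sum_(i in A | i != a) #|(if i == a then o |: chi a else chi i) :&: (L i :&: B)|
          = \sum_(i in A | i != a) #|chi i :&: (L i :&: B)|.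
  by apply: eq_bigr => i /andP[_ /negbTE ->].
rewrite setIUl (setIidPl _) ?sub1set ?inE ?oL ?oB // cardsU1.
have -> : o \notin chi a :&: (L a :&: B) by rewrite inE negb_and /= N.
lia.
Qed.

Local Open Scope ring_scope.
Lemma colsum (chi : agent -> {set item}) :
  (forall i j, i != j -> [disjoint chi i & chi j]) ->
  forall o, \sum_a ind R chi o a = ([exists a, o \in chi a] : nat)%:R.
Proof.
move=> D o; case: (pickP (fun a => o \in chi a)) => [b ob|N].
  have -> : [exists a, o \in chi a] by apply/existsP; exists b.
  rewrite (bigD1 b) //= big1 ?addr0; first by rewrite /ind ob.
  move=> a ab; rewrite /ind; have : o \notin chi a by apply/negP => oa; move: ab; rewrite (disj_not D oa ob) eqxx.
  by move/negbTE ->.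
have -> : [exists a, o \in chi a] = false.
  by apply/negbTE/negP => /existsP[a oa]; have := N a; rewrite /= oa.
by rewrite big1 // => a _; rewrite /ind N.
Qed.

Definition mok chi := okw L chi /\ imaxusw L [set: agent] [set: item] chi.

Lemma stable_mok chi : wstable L chi -> mok chi.
Proof. by case=> al cl mx _; split. Qed.

Lemma wcol chi : mok chi -> forall o, [exists a, o \in chi a] = [exists a, o \in L a].
Proof.
move=> [[al cl] mx] o; apply/existsP/existsP => [[a oa]|[a oa]].
  exists a; have /subsetP := cl a (in_setT a); move/(_ o oa); by rewrite inE => /andP[].
by have := maxcover al mx (in_setT o) (in_setT a) oa.
Qed.

Local Open Scope ring_scope.
Lemma colsum_mok chi psi : mok chi -> mok psi ->
  forall o, \sum_a ind R chi o a = \sum_a ind R psi o a.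
Proof.
move=> mc mp o.
rewrite (colsum _ o) ?(colsum _ o) ?wcol //.
  by case: mp => [[[_ _ D] _] _].
by case: mc => [[[_ _ D] _] _].
Qed.

Lemma iusw_ok chi : okw L chi -> iusw L [set: agent] [set: item] chi = (\sum_a #|chi a|)%N.
Proof.
move=> [_ cl]; rewrite /iusw; apply: eq_big => [a|a _]; first by rewrite inE.
by rewrite (setIidPl (cl a (in_setT a))).
Qed.

Lemma sum_eq1 (u : agent) : (\sum_x ((x == u) : nat))%N = 1%N.
Proof. by rewrite (bigD1 u) //= eqxx big1 // => x /negbTE ->. Qed.

Lemma sum_shift (f g : agent -> nat) u v :
  (forall x, g x + (x == u) = f x + (x == v))%N -> (\sum_x g x = \sum_x f x)%N.
Proof.
move=> H.
have : (\sum_x (g x + (x == u)) = \sum_x (f x + (x == v)))%N by apply: eq_bigr.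
by rewrite !big_split /= !sum_eq1 => /eqP; rewrite eqn_add2r => /eqP.
Qed.

Lemma shift_mok chi chi' u v : mok chi -> okw L chi' ->
  (forall x, #|chi' x| + (x == u) = #|chi x| + (x == v))%N -> mok chi'.
Proof.
move=> [ok mx] ok' H; split => // psi al.
have E : (\sum_x #|chi' x| = \sum_x #|chi x|)%N := sum_shift H.
rewrite (iusw_ok ok') E -(iusw_ok ok); exact: mx.
Qed.

Definition Phi (chi : agent -> {set item}) := (\sum_x #|chi x| * #|chi x|)%N.

Lemma Phi_id (f g : agent -> nat) u v : u != v ->
  (forall x, g x + (x == u) = f x + (x == v))%N ->
  (\sum_x g x * g x + 2 * f u = \sum_x f x * f x + 2 * f v + 2)%N.
Proof.
move=> uv H.
have Hu := H u; have Hv := H v.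
rewrite eqxx (negbTE uv) /= in Hu; rewrite eqxx eq_sym (negbTE uv) /= in Hv.
have vu : v != u by rewrite eq_sym.
rewrite [X in (X + _)%N](bigD1 u) //= [X in (_ + X + _)%N](bigD1 v) //=.
rewrite [X in (_ = X + _ + _)%N](bigD1 u) //= [X in (_ = _ + X + _ + _)%N](bigD1 v) //=.
have -> : (\sum_(i | (i != u) && (i != v)) g i * g i = \sum_(i | (i != u) && (i != v)) f i * f i)%N.
  apply: eq_bigr => x /andP[xu xv]; have := H x; rewrite (negbTE xu) (negbTE xv) !addn0.
  by move=> ->.
nia.
Qed.

End W2.

End P4.
Import P4.

Module P5.

Section W3.
Variables (agent item : finType) (L : agent -> {set item}) (R : realType).
Notation IA := (iarc L [set: agent] [set: item]).

Lemma ind_pos (chi : agent -> {set item}) o a : (0 < ind R chi o a)%R -> o \in chi a.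
Proof. by rewrite /ind; case: (o \in chi a); rewrite ?ltxx. Qed.

Lemma mok_clean chi o a : mok L chi -> o \in chi a -> o \in L a.
Proof.
by case=> [[_ cl] _] oa; have /subsetP := cl a (in_setT a); move/(_ o oa); rewrite inE => /andP[].
Qed.

Lemma T1 chi psi i : mok L chi -> mok L psi -> (#|psi i| < #|chi i|)%N ->
  exists k, [/\ (#|chi k| < #|psi k|)%N, connect (IA chi) i k & connect (IA psi) k i].
Proof.
move=> mc mp hi.
have := @fwd _ _ R (ind R chi) (ind R psi) _ _ _ i.
case.
- by move=> o a; rewrite /ind ler0n.
- by move=> o a; rewrite /ind ler0n.
- by move=> o; rewrite (colsum_mok R mc mp).
- by rewrite !fh_ind ltr_nat.
move=> k [hk ck]; exists k; split.
- by move: hk; rewrite !fh_ind ltr_nat.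
- apply: connect_sub ck => a b /andP[ab /existsP[o /andP[xa yb]]]; apply: connect1.
  rewrite /iarc !inE ab /=; apply/existsP; exists o.
  by rewrite (ind_pos xa) !inE ?andbT (mok_clean mp (ind_pos yb)).
- have := connect_revP ck; apply: connect_sub => a b /andP[ba /existsP[o /andP[xb ya]]].
  apply: connect1.
  rewrite /iarc !inE eq_sym ba /=; apply/existsP; exists o.
  by rewrite (ind_pos ya) !inE ?andbT (mok_clean mc (ind_pos xb)).
Qed.

Lemma reach_w chi u v : wstable L chi -> connect (IA chi) u v -> (#|chi u| <= #|chi v| + 1)%N.
Proof. by case=> _ _ _ H; apply: ist_reach. Qed.

Lemma path_of_connect (e : rel agent) u v : connect e u v -> u != v ->
  exists p, [/\ path e u p, uniq (u :: p) & last u p = v].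
Proof.
case/connectP => p pth lst uv.
case/shortenP: pth lst => p' pth' uq _ lst.
by exists p'.
Qed.

Lemma last_neq (u : agent) p : uniq (u :: p) -> p != [::] -> last u p != u.
Proof.
case: p => [//|y p] /= /andP[]; rewrite inE negb_or => /andP[uy up] _ _.
have := mem_last y p; apply: contraL => /eqP ->.
by rewrite inE negb_or uy.
Qed.

Lemma Phi_min chi : wstable L chi -> forall psi, mok L psi -> (Phi chi <= Phi psi)%N.
Proof.
move=> st; have mc := stable_mok st.
pose D (psi : agent -> {set item}) :=
  (\sum_a ((#|chi a| - #|psi a|) + (#|psi a| - #|chi a|)))%N.
suff H : forall N psi, (D psi < N)%N -> mok L psi -> (Phi chi <= Phi psi)%N.
  by move=> psi; apply: (H (D psi).+1).
elim=> [//|N IH] psi DN mp.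
case: (pickP (fun i => #|psi i| < #|chi i|)%N) => [i hi|N0]; last first.
  rewrite /Phi; apply: leq_sum => a _.
  have : ~~ (#|psi a| < #|chi a|)%N by rewrite N0.
  rewrite -leqNgt => h; exact: leq_mul.
have [k [hk cik cki]] := T1 mc mp hi.
have ki : k != i by apply/eqP => e; move: hk hi; rewrite e; lia.
have bi := reach_w st cik.
have [p [pth uq lst]] := path_of_connect cki ki.
have okp : okw L psi by case: mp.
have [psi' [ok' H' _]] := shift okp pth uq.
rewrite lst in H'.
have mp' := shift_mok mp ok' H'.
have E := Phi_id (f := fun x => #|psi x|) (g := fun x => #|psi' x|) ki H'.
have Dlt : (D psi' + 1 <= D psi)%N.
  have : (\sum_x (((#|chi x| - #|psi' x|) + (#|psi' x| - #|chi x|)) + (x == k)) <= D psi)%N.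
    apply: leq_sum => x _; have := H' x.
    case: (eqVneq x k) => [->|xk]; first by rewrite (negbTE ki) /=; lia.
    case: (eqVneq x i) => [->|xi] /=; lia.
  by rewrite big_split /= sum_eq1.
have : (Phi psi' <= Phi psi)%N by rewrite /Phi; lia.
have : (Phi chi <= Phi psi')%N by apply: IH => //; lia.
lia.
Qed.

Lemma min_stable chi : mok L chi -> (forall psi, mok L psi -> (Phi chi <= Phi psi)%N) ->
  wstable L chi.
Proof.
move=> mc Hmin; have [[al cl] mx] := mc.
split => // u v [p [pn pth uq lst]].
have [chi' [ok' H' _]] := shift (conj al cl) pth uq.
rewrite lst in H'.
have uv : u != v by rewrite -lst eq_sym; apply: last_neq.
have mp' := shift_mok mc ok' H'.
have E := Phi_id (f := fun x => #|chi x|) (g := fun x => #|chi' x|) uv H'.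
have := Hmin chi' mp'; rewrite /Phi in E * => h.
rewrite -ltnNge; lia.
Qed.

Lemma T2 chi u v : wstable L chi -> connect (IA chi) u v -> u != v ->
  #|chi u| = (#|chi v| + 1)%N ->
  exists chi', wstable L chi' /\ forall x, (#|chi' x| + (x == u) = #|chi x| + (x == v))%N.
Proof.
move=> st c uv e.
have [p [pth uq lst]] := path_of_connect c uv.
have [al cl _ _] := st.
have [chi' [ok' H' _]] := shift (conj al cl) pth uq.
rewrite lst in H'.
have mp' := shift_mok (stable_mok st) ok' H'.
have E := Phi_id (f := fun x => #|chi x|) (g := fun x => #|chi' x|) uv H'.
exists chi'; split => //.
apply: min_stable => // psi mp.
have := Phi_min st mp; rewrite /Phi in E *; lia.
Qed.

Lemma width chi psi a : wstable L chi -> wstable L psi -> (#|chi a| <= #|psi a| + 1)%N.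
Proof.
move=> sc sp; rewrite leqNgt; apply/negP => h.
have hi : (#|psi a| < #|chi a|)%N by lia.
have [k [hk cak cka]] := T1 (stable_mok sc) (stable_mok sp) hi.
have := reach_w sc cak; have := reach_w sp cka; lia.
Qed.

End W3.

End P5.
Import P5.

Module P6.

Section W4.
Variables (agent item : finType) (L : agent -> {set item}) (R : realType).
Notation IA := (iarc L [set: agent] [set: item]).
Variable chi0 : agent -> {set item}.
Hypothesis st0 : wstable L chi0.

Lemma arc0 o k b : o \in chi0 k -> o \in L b -> b != k -> IA chi0 k b.
Proof.
move=> ok ob bk; rewrite /iarc !inE eq_sym bk /=; apply/existsP; exists o.
by rewrite ok !inE ob.
Qed.

Lemma mono_hi o k b : o \in chi0 k -> o \in L b -> b != k ->
  forall psi, wstable L psi -> exists phi, wstable L phi /\ (#|psi k| <= #|phi b|)%N.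
Proof.
move=> ok ob bk psi sp.
have a0 := arc0 ok ob bk.
case: (leqP #|psi k| #|chi0 b|) => hb; first by exists chi0.
have r0 := reach_w st0 (connect1 a0).
have w := width R k sp st0.
case: (leqP #|psi k| #|chi0 k|) => hk.
  have [phi [sphi H]] := T2 R st0 (connect1 a0) (ltac:(by rewrite eq_sym)) (ltac:(lia)).
  exists phi; split => //; have := H b; rewrite eqxx (negbTE bk) /=. lia.
have hi : (#|chi0 k| < #|psi k|)%N by [].
have [c [hc ckc cck]] := T1 R (stable_mok sp) (stable_mok st0) hi.
have rp := reach_w sp ckc.
have ccb : connect (IA chi0) c b by apply: connect_trans cck (connect1 a0).
have cb : c != b by apply/eqP => e; move: hc rp hb; rewrite e; lia.
have rc := reach_w st0 ccb.
have [phi [sphi H]] := T2 R st0 ccb cb (ltac:(lia)).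
exists phi; split => //; have := H b; rewrite eqxx eq_sym (negbTE cb) /=; lia.
Qed.

Lemma mono_lo o k b : o \in chi0 k -> o \in L b -> b != k ->
  forall psi, wstable L psi -> exists phi, wstable L phi /\ (#|phi k| <= #|psi b|)%N.
Proof.
move=> ok ob bk psi sp.
have a0 := arc0 ok ob bk.
have kb : k != b by rewrite eq_sym.
case: (leqP #|chi0 k| #|psi b|) => hk; first by exists chi0.
have r0 := reach_w st0 (connect1 a0).
have w := width R b st0 sp.
case: (leqP #|chi0 b| #|psi b|) => hb.
  have [phi [sphi H]] := T2 R st0 (connect1 a0) kb (ltac:(lia)).
  exists phi; split => //; have := H k; rewrite eqxx (negbTE kb) /=; lia.
have [c [hc cbc ccb]] := T1 R (stable_mok st0) (stable_mok sp) hb.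
have rp := reach_w sp ccb.
have ckc : connect (IA chi0) k c by apply: connect_trans (connect1 a0) cbc.
have kc : k != c by apply/eqP => e; move: hc rp hk; rewrite -e; lia.
have rc := reach_w st0 ckc.
have [phi [sphi H]] := T2 R st0 ckc kc (ltac:(lia)).
exists phi; split => //; have := H k; rewrite eqxx (negbTE kc) /=; lia.
Qed.

Definition grp a lo hi :=
  [/\ forall psi, wstable L psi -> (lo <= #|psi a| <= hi)%N,
      exists psi, wstable L psi /\ #|psi a| = lo &
      exists psi, wstable L psi /\ #|psi a| = hi].

Lemma grp_width a lo hi : grp a lo hi -> (lo <= hi <= lo + 1)%N.
Proof.
case=> B [p1 [s1 e1]] [p2 [s2 e2]].
have := width R a s2 s1; have := B _ s1; lia.
Qed.

Lemma grp_uniq a lo hi lo' hi' : grp a lo hi -> grp a lo' hi' -> lo = lo' /\ hi = hi'.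
Proof.
case=> B [p1 [s1 e1]] [p2 [s2 e2]] [B' [q1 [t1 f1]] [q2 [t2 f2]]].
have := B _ t1; have := B _ t2; have := B' _ s1; have := B' _ s2; lia.
Qed.

Lemma grp_inter o k b lk hk lb hb : o \in chi0 k -> o \in L b ->
  grp k lk hk -> grp b lb hb -> (lk = lb /\ hk = hb) \/ (hk <= lb)%N.
Proof.
move=> ok ob gk gb.
case: (eqVneq b k) => [e|bk].
  by subst; left; apply: grp_uniq gk gb.
have [Bk [p1 [s1 e1]] [p2 [s2 e2]]] := gk.
have [Bb [q1 [t1 f1]] [q2 [t2 f2]]] := gb.
have [phi [sphi h1]] := mono_hi ok ob bk s2.
have [phi' [sphi' h2]] := mono_lo ok ob bk t1.
have := Bb _ sphi; have := Bk _ sphi'.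
have := grp_width gk; have := grp_width gb.
lia.
Qed.

Lemma layer_grp a d : a \in layer L d -> grp a d d.
Proof.
rewrite inE => /asboolP H; split.
- by move=> psi sp; rewrite (H psi sp) leqnn.
- by exists chi0; split => //; apply: H.
- by exists chi0; split => //; apply: H.
Qed.

Lemma layerm_grp a d : a \in layerm L d -> grp a d.-1 d.
Proof.
rewrite inE => /asboolP [H [e1 e2]]; split => //.
by move=> psi sp; case: (H psi sp) => ->; lia.
Qed.

Lemma grp_layer a d : grp a d d -> a \in layer L d.
Proof.
case=> B _ _; rewrite inE; apply/asboolP => psi sp; have := B _ sp; lia.
Qed.

Lemma grp_layerm a d : grp a d.-1 d -> (1 <= d)%N -> (d.-1 != d)%N -> a \in layerm L d.
Proof.
case=> B e1 e2 _ _; rewrite inE; apply/asboolP; split => //.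
move=> psi sp; have := B _ sp; lia.
Qed.

Lemma cover a : exists lo hi, grp a lo hi.
Proof.
case: (pickP (fun f : {ffun agent -> {set item}} => `[< wstable L f >] && (#|f a| != #|chi0 a|))).
  move=> f0 /andP[/asboolP sf0 ne0].
  have [f [sf ne]] : exists f : agent -> {set item}, wstable L f /\ #|f a| != #|chi0 a|.
    by exists (fun x => f0 x).
  have w1 := width R a sf st0; have w2 := width R a st0 sf.
  have G : forall psi, wstable L psi -> (#|psi a| = #|chi0 a| \/ #|psi a| = #|f a|).
    move=> psi sp; have := width R a sp st0; have := width R a st0 sp.
    have := width R a sp sf; have := width R a sf sp; move/eqP: ne; lia.
  case: (ltngtP #|f a| #|chi0 a|) => h; last by move: ne; rewrite h eqxx.
  - exists #|f a|, #|chi0 a|; split.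
    + by move=> psi sp; case: (G psi sp) => ->; lia.
    + by exists f.
    + by exists chi0.
  - exists #|chi0 a|, #|f a|; split.
    + by move=> psi sp; case: (G psi sp) => ->; lia.
    + by exists chi0.
    + by exists f.
move=> N; exists #|chi0 a|, #|chi0 a|; split; try by exists chi0.
move=> psi sp.
have e : (fun x => [ffun y => psi y] x) = psi by apply: funext => x; rewrite ffunE.
have sf : wstable L [ffun x => psi x].
  by change (wstable L (fun x => [ffun y => psi y] x)); rewrite e.
have := N [ffun x => psi x]; rewrite /= (asboolT sf) /= ffunE => /negbFE/eqP ->.
by rewrite leqnn.
Qed.

End W4.

End P6.
Import P6.

Module P7.

Section W5.
Variables (agent item : finType) (L : agent -> {set item}) (R : realType).

Lemma fconnect A B (x : item -> agent -> R) u v : fstable L A B x ->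
  connect (farc L A B x) u v -> (fh x u <= fh x v)%R.
Proof.
move=> st /connectP [p pth ->]; elim: p u pth => [|w p IH] u /=; first by [].
case/andP => a pth; apply: le_trans (fst_arc st a) (IH _ pth).
Qed.

Local Open Scope ring_scope.

Lemma fcover (A : {set agent}) (B : {set item}) (x : item -> agent -> R) :
  falloc A B x -> fmaxusw L A B x ->
  forall o a, o \in B -> a \in A -> o \in L a -> \sum_(i in A) x o i = 1.
Proof.
move=> [x0 s1 z] M o a oB aA oL.
apply/eqP; rewrite eq_le s1 /=; rewrite leNgt; apply/negP => lt.
set s := \sum_(i in A) x o i in lt.
pose y := fun o' i => x o' i + ((o' == o) && (i == a))%:R * (1 - s).
have al : falloc A B y.
  split.
  - by move=> o' i; rewrite /y addr_ge0 // mulr_ge0 // subr_ge0 ltW.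
  - move=> o'; rewrite /y big_split /=.
    case: (eqVneq o' o) => [->|o'o] /=.
      rewrite [X in _ + X <= _](bigD1 a) //= eqxx mul1r.
      rewrite [X in _ + (_ + X) <= _]big1; last by move=> i /andP[_ /negbTE ->]; rewrite mul0r.
      by rewrite addr0 -/s; lra.
    rewrite [X in _ + X <= _]big1 ?addr0 //; by move=> i _; rewrite mul0r.
  - move=> o' i H; rewrite /y z //.
    case: (eqVneq o' o) => [e|]; case: (eqVneq i a) => [e'|] /=; rewrite ?mul0r ?addr0 //.
    by move: H; rewrite e e' aA oB.
have := M y al; rewrite /fusw /y.
under eq_bigr do rewrite big_split /=.
rewrite big_split /=.
have E : \sum_(i in A) \sum_(o0 in L i :&: B) ((o0 == o) && (i == a))%:R * (1 - s) = 1 - s.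
  rewrite (bigD1 a) //= (bigD1 o) ?inE ?oL ?oB //= !eqxx mul1r.
  rewrite big1; last by move=> o' /andP[_ /negbTE ->]; rewrite mul0r.
  rewrite big1; last first.
    move=> i /andP[_ ia]; rewrite big1 // => o' _; by rewrite (negbTE ia) andbF mul0r.
  by rewrite !addr0.
rewrite E; lra.
Qed.


Definition restr (A : {set agent}) (chi : agent -> {set item}) : agent -> {set item} :=
  fun a => if a \in A then chi a else set0.

Variable chi0 : agent -> {set item}.
Hypothesis st0 : wstable L chi0.

Lemma restr_disj A : forall i j, i != j -> [disjoint restr A chi0 i & restr A chi0 j].
Proof.
have [[_ _ D] _ _ _] := st0.
move=> i j ij; rewrite /restr; case: (i \in A); case: (j \in A);
  rewrite ?disjoint0 ?(disjoint_sym _ set0) ?disjoint0 //; first exact: D.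
all: by apply/disjP => p; rewrite inE.
Qed.

Lemma restr_mem A o a : (o \in restr A chi0 a) = (a \in A) && (o \in chi0 a).
Proof. by rewrite /restr; case: (a \in A); rewrite ?inE. Qed.

Lemma clean0 o a : o \in chi0 a -> o \in L a.
Proof. move=> oa; exact: (mok_clean (stable_mok st0) oa). Qed.

Lemma gam_height d g : istable L (layer L d) (Layer L chi0 d) g ->
  forall a, a \in layer L d -> #|g a| = d.
Proof.
set A := layer L d; set B := Layer L chi0 d.
move=> [[out sub D] cl mx stab].
have hA : forall a, a \in A -> #|chi0 a| = d by move=> a; rewrite inE => /asboolP; apply.
have col : forall o, \sum_a ind R g o a = \sum_a ind R (restr A chi0) o a.
  move=> o; rewrite (colsum R D) (colsum R (restr_disj A)); congr (_%:R); congr nat_of_bool.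
  apply/existsP/existsP => [[b ob]|[b]].
    have /subsetP /(_ o ob) /bigcupP [i iA oi] := sub b.
    by exists i; rewrite restr_mem iA.
  rewrite restr_mem => /andP[bA ob].
  have oB : o \in B by apply/bigcupP; exists b.
  by apply: (maxcover (And3 out sub D) mx oB bA (clean0 ob)).
have inA : forall p, g p != set0 -> p \in A.
  by move=> p; apply: contraR => pA; rewrite out.
have arc : forall o p q, o \in g p -> o \in chi0 q -> q \in A -> p != q -> iarc L A B g p q.
  move=> o p q op oq qA pq; rewrite /iarc qA pq inA /=; last by apply/set0Pn; exists o.
  apply/existsP; exists o; rewrite op !inE clean0 //=.
  by have /subsetP := sub p; apply.
have ge0 : forall (c : agent -> {set item}) o a, (0 <= ind R c o a)%R by move=> c o a; rewrite /ind ler0n.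
move=> a aA; apply/eqP; rewrite eqn_leq; apply/andP; split; rewrite leqNgt; apply/negP => h.
- have := @fwd _ _ R (ind R g) (ind R (restr A chi0)) (ge0 _) (ge0 _) (fun o => ltac:(by rewrite col)) a.
  case; first by rewrite !fh_ind ltr_nat /restr aA hA.
  move=> k [hk ck]; move: hk; rewrite !fh_ind ltr_nat => hk.
  have kA : k \in A.
    by move: hk; rewrite /restr; case: (k \in A) => //; rewrite cards0.
  move: hk; rewrite /restr kA hA // => hk.
  have ck' : connect (iarc L A B g) a k.
    apply: connect_sub ck => p q /andP[pq /existsP[o /andP[xp yq]]]; apply: connect1.
    move: (ind_pos xp) (ind_pos yq); rewrite restr_mem => op /andP[qA oq].
    exact: arc op oq qA pq.
  have := ist_reach stab ck'; lia.
- have := @fwd _ _ R (ind R (restr A chi0)) (ind R g) (ge0 _) (ge0 _) (fun o => ltac:(by rewrite col)) a.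
  case; first by rewrite !fh_ind ltr_nat /restr aA hA.
  move=> k [hk ck]; move: hk; rewrite !fh_ind ltr_nat => hk.
  have kA : k \in A.
    apply: inA; apply/eqP => e; move: hk; by rewrite e cards0.
  move: hk; rewrite /restr kA hA // => hk.
  have ck' : connect (iarc L A B g) k a.
    have := connect_revP ck; apply: connect_sub => p q /andP[qp /existsP[o /andP[yq xp]]].
    apply: connect1.
    move: (ind_pos xp) (ind_pos yq); rewrite restr_mem => op /andP[qA oq].
    by apply: arc op oq qA _; rewrite eq_sym.
  have := ist_reach stab ck'; lia.
Qed.


Lemma sumA (A : {set agent}) B (x : item -> agent -> R) o : falloc A B x ->
  \sum_a x o a = \sum_(a in A) x o a.
Proof.
case=> _ _ z; rewrite (bigID (mem A)) /= [X in _ + X]big1 ?addr0 // => a aA.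
by apply: z; rewrite aA.
Qed.

Lemma gamm_height d (x : item -> agent -> R) :
  fstable L (layerm L d) (Layerm L chi0 d) x ->
  forall a, a \in layerm L d -> ((d.-1)%:R <= fh x a <= d%:R)%R.
Proof.
set A := layerm L d; set B := Layerm L chi0 d.
move=> fs; have [[x0 s1 z] cl mx _] := fs.
have hA : forall a, a \in A -> (d.-1 <= #|chi0 a| <= d)%N.
  move=> a; rewrite inE => /asboolP [H _]; case: (H chi0 st0) => ->; lia.
have col : forall o, \sum_a x o a = \sum_a ind R (restr A chi0) o a.
  move=> o; rewrite (colsum R (restr_disj A)).
  case: (pickP (fun b => o \in restr A chi0 b)) => [b|N].
    rewrite restr_mem => /andP[bA ob].
    have oB : o \in B by apply/bigcupP; exists b.
    have -> : [exists a, o \in restr A chi0 a] by apply/existsP; exists b; rewrite restr_mem bA.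
    by rewrite (sumA _ (And3 x0 s1 z)) (fcover (And3 x0 s1 z) mx oB bA (clean0 ob)).
  have -> : [exists a, o \in restr A chi0 a] = false.
    by apply/negbTE/negP => /existsP[a oa]; have := N a; rewrite /= oa.
  have oB : o \notin B.
    apply/negP => /bigcupP [i iA oi]; have := N i; by rewrite /= restr_mem iA oi.
  by rewrite big1 // => a _; apply: z; rewrite oB orbT.
have inA : forall o p, (0 < x o p)%R -> p \in A.
  move=> o p; apply: contraTT => pA; by rewrite z ?pA // ltxx.
have arc : forall o p q, (0 < x o p)%R -> o \in chi0 q -> q \in A -> p != q -> farc L A B x p q.
  move=> o p q xp oq qA pq; rewrite /farc qA pq (inA o p) //=.
  apply/existsP; exists o; rewrite xp !inE clean0 //=.
  by apply/bigcupP; exists q.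
have ge0 : forall (c : agent -> {set item}) o a, (0 <= ind R c o a)%R by move=> c o a; rewrite /ind ler0n.
have fge0 : forall a, (0 <= fh x a)%R by move=> a; apply: sumr_ge0.
move=> a aA; have := hA a aA => /andP[l u].
apply/andP; split; rewrite leNgt; apply/negP => h.
- have := @fwd _ _ R (ind R (restr A chi0)) x (ge0 _) x0 (fun o => ltac:(by rewrite col)) a.
  case.
    rewrite fh_ind /restr aA; apply: lt_le_trans h _; by rewrite ler_nat.
  move=> k [hk ck]; move: hk; rewrite !fh_ind => hk.
  have kA : k \in A.
    case: (boolP (k \in A)) => // kA; exfalso.
    move: hk; rewrite /restr (negbTE kA) cards0 /fh big1 ?ltxx // => o _.
    by apply: z; rewrite kA.
  move: hk; rewrite /restr kA => hk.
  have ck' : connect (farc L A B x) k a.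
    have := connect_revP ck; apply: connect_sub => p q /andP[qp /existsP[o /andP[yq xp]]].
    apply: connect1.
    move: (ind_pos yq); rewrite restr_mem => /andP[qA oq].
    by apply: arc xp oq qA _; rewrite eq_sym.
  have := fconnect fs ck'.
  have : ((d.-1)%:R <= #|chi0 k|%:R :> R)%R by rewrite ler_nat; have := hA k kA; lia.
  move: h hk; lra.
- have := @fwd _ _ R x (ind R (restr A chi0)) x0 (ge0 _) (fun o => ltac:(by rewrite col)) a.
  case.
    rewrite fh_ind /restr aA; apply: le_lt_trans h; by rewrite ler_nat.
  move=> k [hk ck]; move: hk; rewrite !fh_ind => hk.
  have kA : k \in A.
    case: (boolP (k \in A)) => // kA; exfalso.
    move: hk; rewrite /restr (negbTE kA) cards0 => hk.
    by move: (fge0 k); rewrite leNgt hk.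
  move: hk; rewrite /restr kA => hk.
  have ck' : connect (farc L A B x) a k.
    apply: connect_sub ck => p q /andP[pq /existsP[o /andP[xp yq]]]; apply: connect1.
    move: (ind_pos yq); rewrite restr_mem => /andP[qA oq].
    exact: arc xp oq qA pq.
  have := fconnect fs ck'.
  have : (#|chi0 k|%:R <= d%:R :> R)%R by rewrite ler_nat; have := hA k kA; lia.
  move: h hk; lra.
Qed.

End W5.

End P7.
Import P7.

Module P8.

Section Main.
Variables (agent item : finType) (L : agent -> {set item}) (R : realType).
Variable chi0 : agent -> {set item}.
Hypothesis st0 : wstable L chi0.
Variables (gam : nat -> agent -> {set item}) (gamm : nat -> item -> agent -> R).
Hypothesis Hgam : forall d : nat, istable L (layer L d) (Layer L chi0 d) (gam d).
Hypothesis Hgamm : forall d : nat, (1 <= d)%N ->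
     fstable L (layerm L d) (Layerm L chi0 d) (gamm d).

Local Open Scope ring_scope.

Lemma sum_single (F : nat -> R) lo hi d : (lo <= d < hi)%N ->
  (forall d', (lo <= d' < hi)%N -> d' != d -> F d' = 0) ->
  \sum_(lo <= d' < hi) F d' = F d.
Proof.
move=> hd H; rewrite (bigD1_seq d) ?mem_index_iota ?iota_uniq //=.
rewrite big_seq_cond big1 ?addr0 // => d' /andP[]; rewrite mem_index_iota; exact: H.
Qed.

Lemma sum_zero (F : nat -> R) lo hi :
  (forall d', (lo <= d' < hi)%N -> F d' = 0) -> \sum_(lo <= d' < hi) F d' = 0.
Proof. by move=> H; rewrite big_seq big1 // => d'; rewrite mem_index_iota; exact: H. Qed.

Definition ing a (G : bool * nat) :=
  if G.1 then a \in layer L G.2 else (1 <= G.2)%N && (a \in layerm L G.2).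
Definition BG (G : bool * nat) := if G.1 then Layer L chi0 G.2 else Layerm L chi0 G.2.
Definition xG (G : bool * nat) o i : R := if G.1 then (o \in gam G.2 i)%:R else gamm G.2 o i.
Definition loG (G : bool * nat) := if G.1 then G.2 else G.2.-1.

Lemma ing_grp a G : ing a G -> grp L a (loG G) G.2.
Proof.
rewrite /ing /loG; case: G => [[] d] /=; first by move=> h; exact: (layer_grp st0 h).
by case/andP => _ h; exact: (layerm_grp h).
Qed.

Lemma ing_uniq a G G' : ing a G -> ing a G' -> G = G'.
Proof.
move=> h h'; have g := ing_grp h; have g' := ing_grp h'.
have [e1 e2] := grp_uniq g g'; clear g g'.
move: h h' e1 e2; rewrite /ing /loG; case: G => [[] d]; case: G' => [[] d'] /=.
- by move=> _ _ _ ->.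
- by move=> _ /andP[h _]; lia.
- by move=> /andP[h _] _; lia.
- by move=> _ _ _ ->.
Qed.

Lemma cover_ing a : exists G, ing a G /\ (G.2 <= #|item|)%N.
Proof.
have [lo [hi g]] := P6.cover R st0 a.
have w := grp_width R g.
have hm : (hi <= #|item|)%N.
  by case: g => _ _ [psi [_ <-]]; apply: max_card.
case: (eqVneq lo hi) => [e|ne].
  by exists (true, hi); split => //; rewrite /ing /=; apply: grp_layer; rewrite -{1}e.
exists (false, hi); split => //; rewrite /ing /=.
have e : lo = hi.-1 by lia.
apply/andP; split; first by lia.
by apply: grp_layerm; rewrite -?e //; lia.
Qed.

Lemma xG_nz G o i : G.1 || (1 <= G.2)%N -> xG G o i != 0 -> ing i G /\ o \in BG G.
Proof.
rewrite /xG /ing /BG; case: G => [[] d] /= d1 h.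
- have [out sub _] := (let: And4 a _ _ _ := Hgam d in a).
  have oi : o \in gam d i by move: h; case: (o \in gam d i); rewrite ?eqxx.
  split; last by have /subsetP := sub i; apply.
  by apply: contraTT oi => ni; rewrite out // inE.
- have [[_ _ z] _ _ _] := Hgamm d1.
  split.
    rewrite d1 /=; apply: contraTT h => ni; rewrite negbK z ?eqxx //; by rewrite ni.
  apply: contraTT h => nb; rewrite negbK z ?eqxx //; by rewrite nb orbT.
Qed.


Lemma ing_valid a G : ing a G -> G.1 || (1 <= G.2)%N.
Proof. by rewrite /ing; case: G => [[] d] //= /andP[]. Qed.

Lemma BG_owner G o : G.1 || (1 <= G.2)%N -> o \in BG G -> exists j, ing j G /\ o \in chi0 j.
Proof.
rewrite /BG /ing; case: G => [[] d] /= v /bigcupP [j jA oj]; exists j; split => //.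
by rewrite v jA.
Qed.

Lemma gam_out a G d : ing a G -> G != (true, d) -> gam d a = set0.
Proof.
move=> h ne; have [out _ _] := (let: And4 a _ _ _ := Hgam d in a).
apply: out; apply/negP => ad.
have : ing a (true, d) by [].
by move/(ing_uniq h) => e; move: ne; rewrite e eqxx.
Qed.

Lemma gamm_out a G d o : ing a G -> G != (false, d) -> (1 <= d)%N -> gamm d o a = 0.
Proof.
move=> h ne d1; have [[_ _ z] _ _ _] := Hgamm d1.
apply: z; apply/orP; left; apply/negP => ad.
have : ing a (false, d) by rewrite /ing /= d1.
by move/(ing_uniq h) => e; move: ne; rewrite e eqxx.
Qed.

Lemma comb_ing a G o : ing a G -> (G.2 <= #|item|)%N -> combine gam gamm o a = xG G o a.
Proof.
move=> h hm; rewrite /combine /xG.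
case: G h hm => [[] d] h /= hm.
- rewrite (sum_single (d := d)); last first.
    move=> d' _ ne; rewrite (gam_out (d := d') h) ?inE //.
    by apply: contra ne => /eqP [->].
  + by rewrite ltnS hm.
  + rewrite sum_zero ?addr0 // => d' /andP[d1 _] /=; exact: (@gamm_out a _ d' o h).
- rewrite sum_zero ?add0r; last first.
    move=> d' _; rewrite (gam_out (d := d') h) ?inE //.
  rewrite (sum_single (d := d)) //.
    by move: h; rewrite /ing /= => /andP[-> _]; rewrite ltnS hm.
  move=> d' /andP[d1 _] ne /=; apply: (@gamm_out a _ d' o h) => //.
  by apply: contra ne => /eqP [->].
Qed.


Notation gamma := (combine gam gamm).

Lemma chi0_disj o j k : o \in chi0 j -> o \in chi0 k -> j = k.
Proof. by have [[_ _ D] _ _ _] := st0; move=> oj ok; apply: (disj_not D oj ok). Qed.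

Lemma item_comb o k G i : o \in chi0 k -> ing k G -> gamma o i = xG G o i.
Proof.
move=> ok hk; have [G' [hi hm]] := cover_ing i.
rewrite (comb_ing o hi hm); case: (eqVneq G' G) => [->//|ne].
have -> : xG G' o i = 0.
  apply/eqP/negPn/negP => /(xG_nz (ing_valid hi)) [_ oB].
  have [j [hj oj]] := BG_owner (ing_valid hi) oB.
  by move: ne; rewrite (chi0_disj oj ok) in hj; rewrite (ing_uniq hj hk) eqxx.
apply/esym/eqP/negPn/negP => /(xG_nz (ing_valid hk)) [hi' _].
by move: ne; rewrite (ing_uniq hi hi') eqxx.
Qed.

Lemma noowner_comb o i : (forall k, o \notin chi0 k) -> gamma o i = 0.
Proof.
move=> N; have [G' [hi hm]] := cover_ing i.
rewrite (comb_ing o hi hm); apply/eqP/negPn/negP => /(xG_nz (ing_valid hi)) [_ oB].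
have [j [hj oj]] := BG_owner (ing_valid hi) oB.
by move: (N j); rewrite oj.
Qed.

Lemma colsum_G o k G : o \in chi0 k -> ing k G -> \sum_i xG G o i = 1.
Proof.
move=> ok hk; rewrite /xG; case: G hk => [[] d] hk /=.
- have [[out sub D] _ mx _] := Hgam d.
  have := colsum R D o; rewrite /ind => ->.
  have oB : o \in Layer L chi0 d by apply/bigcupP; exists k.
  have [b ob] := maxcover (And3 out sub D) mx oB hk (clean0 st0 ok).
  by have -> : [exists a, o \in gam d a] by apply/existsP; exists b.
- move: hk; rewrite /ing /= => /andP[d1 kA].
  have [al _ mx _] := Hgamm d1.
  have oB : o \in Layerm L chi0 d by apply/bigcupP; exists k.
  by rewrite (sumA _ al) (fcover al mx oB kA (clean0 st0 ok)).
Qed.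

Lemma col_comb o : \sum_i gamma o i = ([exists a, o \in L a] : nat)%:R.
Proof.
case: (pickP (fun k => o \in chi0 k)) => [k ok|N].
  have -> : [exists a, o \in L a] by apply/existsP; exists k; exact: (clean0 st0 ok).
  have [G [hk _]] := cover_ing k.
  by rewrite (eq_bigr _ (fun i _ => item_comb i ok hk)) (colsum_G ok hk).
have -> : [exists a, o \in L a] = false.
  apply/negbTE/negP => /existsP[a oa].
  have [al cl mx _] := st0.
  have [b ob] := maxcover al mx (in_setT o) (in_setT a) oa.
  by move: (N b); rewrite /= ob.
by rewrite big1 // => i _; apply: noowner_comb => k; rewrite N.
Qed.

Lemma comb_ge0 o i : 0 <= gamma o i.
Proof.
rewrite /combine; apply: addr_ge0; first by apply: sumr_ge0 => d _; rewrite ler0n.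
rewrite big_seq; apply: sumr_ge0 => d; rewrite mem_index_iota => /andP[d1 _].
by have [[x0 _ _] _ _ _] := Hgamm d1.
Qed.

Lemma comb_clean o i : o \notin L i -> gamma o i = 0.
Proof.
move=> oL; have [G [hi hm]] := cover_ing i.
rewrite (comb_ing o hi hm) /xG; case: G hi hm => [[] d] hi hm /=.
- have [_ cl _ _] := Hgam d.
  have : o \notin gam d i.
    apply: contra oL => oi; have /subsetP := cl i hi; move/(_ o oi); by rewrite inE => /andP[].
  by move/negbTE ->.
- move: hi; rewrite /ing /= => /andP[d1 _].
  have [_ cl _ _] := Hgamm d1; apply: cl; by rewrite inE negb_and oL.
Qed.


Lemma fusw_T (x : item -> agent -> R) :
  fusw L [set: agent] [set: item] x = \sum_o \sum_i (o \in L i)%:R * x o i.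
Proof.
transitivity (\sum_i \sum_o (o \in L i)%:R * x o i); last by rewrite exchange_big.
rewrite /fusw; apply: eq_big => [i|i _]; first by rewrite inE.
rewrite big_mkcond /=; apply: eq_bigr => o _.
by rewrite !inE andbT; case: (o \in L i); rewrite ?mul1r ?mul0r.
Qed.


Lemma comb_falloc : falloc [set: agent] [set: item] gamma.
Proof.
split.
- exact: comb_ge0.
- move=> o; rewrite (eq_bigl xpredT) ?col_comb; last by move=> i; rewrite inE.
  by case: [exists a, o \in L a]; rewrite ?ler01 ?lexx.
- by move=> o i; rewrite !inE.
Qed.

Lemma comb_max : fmaxusw L [set: agent] [set: item] gamma.
Proof.
move=> y [y0 s1 _]; rewrite !fusw_T; apply: ler_sum => o _.
have -> : \sum_i (o \in L i)%:R * gamma o i = \sum_i gamma o i.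
  apply: eq_bigr => i _; case: (boolP (o \in L i)) => h; first by rewrite mul1r.
  by rewrite comb_clean // mulr0.
rewrite col_comb.
case: (boolP [exists a, o \in L a]) => [_|N].
  apply: le_trans (_ : \sum_i y o i <= 1).
    apply: ler_sum => i _; case: (o \in L i); by rewrite ?mul1r ?mul0r.
  by rewrite -(eq_bigl _ _ (fun i => in_setT i)); apply: s1.
rewrite big1 // => i _.
have : o \notin L i by apply: contra N => h; apply/existsP; exists i.
by move/negbTE ->; rewrite mul0r.
Qed.

Lemma fh_comb a G : ing a G -> (G.2 <= #|item|)%N -> fh gamma a = \sum_o xG G o a.
Proof. by move=> h hm; apply: eq_bigr => o _; rewrite (comb_ing o h hm). Qed.

Lemma comb_bounds a G : ing a G -> (G.2 <= #|item|)%N ->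
  (loG G)%:R <= fh gamma a <= G.2%:R.
Proof.
move=> h hm; rewrite (fh_comb h hm) /xG /loG.
case: G h hm => [[] d] h hm /=.
- have := fh_ind R (gam d) a; rewrite /fh /ind => ->.
  by rewrite (gam_height R st0 (Hgam d) h) lexx.
- move: h; rewrite /ing /= => /andP[d1 h].
  exact: (gamm_height st0 (Hgamm d1) h).
Qed.


Lemma G_eq G G' : G.1 || (1 <= G.2)%N -> G'.1 || (1 <= G'.2)%N ->
  loG G = loG G' -> G.2 = G'.2 -> G = G'.
Proof.
rewrite /loG; case: G => [[] d]; case: G' => [[] d'] /= v v' e1 e2; try by rewrite e2.
- by move: e1; rewrite e2; lia.
- by move: e1; rewrite e2; lia.
Qed.

Lemma arc_comb a b o : a != b -> 0 < gamma o a -> o \in L b -> fh gamma a <= fh gamma b.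
Proof.
move=> ab xa ob.
have [Ga [ha hma]] := cover_ing a.
have [Gb [hb hmb]] := cover_ing b.
have xa' : xG Ga o a != 0 by rewrite -(comb_ing o ha hma) gt_eqF.
have [_ oB] := xG_nz (ing_valid ha) xa'.
have [k [hk ok]] := BG_owner (ing_valid ha) oB.
have ba := comb_bounds ha hma; have bb := comb_bounds hb hmb.
case: (grp_inter R st0 ok ob (ing_grp hk) (ing_grp hb)) => [[e1 e2]|le].
- have eG : Ga = Gb.
    exact: G_eq (ing_valid ha) (ing_valid hb) e1 e2.
  subst Gb; clear e1 e2.
  move: ha hb ba bb xa' oB hma hmb; rewrite /loG /xG /BG.
  case: Ga hk => [[] d] /= hk ha hb ba bb xa' oB hma hmb.
  + move: ba bb => /andP[b1 b2] /andP[b3 b4]; apply: le_trans b2 b3.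
  + move: ha hb; rewrite /ing /= => /andP[d1 ha] /andP[_ hb].
    rewrite (fh_comb (G := (false, d)) _ hma) ?(fh_comb (G := (false, d)) _ hmb) /=;
      try by rewrite /ing /= d1.
    apply: fst_arc (Hgamm d1) _.
    rewrite /farc ha hb ab /=; apply/existsP; exists o.
    have [[x0 _ _] _ _ _] := Hgamm d1.
    by rewrite lt0r xa' x0 /= inE ob oB.
- move: ba bb => /andP[_ b2] /andP[b3 _].
  apply: le_trans b2 (le_trans _ b3); by rewrite ler_nat.
Qed.

Lemma chain s : forall u, uniq (u :: map snd s) ->
  (forall a o b, (a, (o, b)) \in zip (u :: map snd s) s ->
     0 < gamma o a /\ o \in L b :&: [set: item]) ->
  fh gamma u <= fh gamma (last u (map snd s)).
Proof.
elim: s => [|[o b] s IH] u /=; first by move=> _ _; rewrite lexx.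
case/andP; rewrite inE negb_or => /andP[ub _] uq H.
have [xa] := H u o b (mem_head _ _); rewrite !inE ?andbT => ob.
apply: le_trans (arc_comb ub xa ob) _.
apply: IH => // a o' b' m; apply: H; by rewrite inE m orbT.
Qed.

Theorem main : fstable L [set: agent] [set: item] gamma.
Proof.
split.
- exact: comb_falloc.
- move=> o i; rewrite !inE ?andbT; exact: comb_clean.
- exact: comb_max.
- move=> u v D [s [[sn uq lst _ D0] H]].
  have := chain uq (fun a o b m => let: conj h1 (conj _ h3) := H a o b m in conj h1 h3).
  rewrite lst; lra.
Qed.

End Main.

End P8.
Import P8.

Local Open Scope ring_scope.

Theorem lemma6 (R : realType) (n m : nat) (L : 'I_n -> {set 'I_m})
  (chi0 : 'I_n -> {set 'I_m}) (Hchi0 : wstable L chi0)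
  (gam : nat -> 'I_n -> {set 'I_m}) (gamm : nat -> 'I_m -> 'I_n -> R)
  (Hgam : forall d : nat, istable L (layer L d) (Layer L chi0 d) (gam d))
  (Hgamm : forall d : nat, (1 <= d)%N ->
     fstable L (layerm L d) (Layerm L chi0 d) (gamm d)) :
  fstable L setT setT (combine gam gamm).
Proof.
exact: (main Hchi0 Hgam Hgamm).
Qed.
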